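(* Let $q\in\mathscr{P}_2(\mathbb{R}^d)$ not give mass to small sets, and let $\psi:\mathbb{R}^d\to(-\infty,+\infty]$ be a proper convex function. Then \[ \sup_{p\in\mathscr{P}_2(\mathbb{R}^d)}\Big(\mathrm{MCov}(p,q)-\int\psi\,dp\Big)=\int\psi^\ast\,dq. \]
   Context: $\mathscr{P}_2(\mathbb{R}^d)$: Borel probability measures with finite second moment. $q$ does not give mass to small sets: $q(A)=0$ for measurable $A$ of Hausdorff dimension $\le d-1$. $\mathrm{MCov}(p,q)\coloneqq\sup_{\tilde\pi\in\mathsf{Cpl}(p,q)}\int\langle y,z\rangle\,d\tilde\pi$ over couplings. A proper convex function is a convex $\psi$ with $\operatorname{dom}\psi=\{\psi<+\infty\}\neq\varnothing$. $\psi^\ast(x)\coloneqq\sup_y(\langle x,y\rangle-\psi(y))$. *)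

(* Defs.v *)
From HB Require Import structures.
From mathcomp Require Import all_boot all_order all_algebra.
From mathcomp Require Import all_classical all_reals all_analysis.
From mathcomp Require Import measurable_realfun.
Set Implicit Arguments. Unset Strict Implicit. Unset Printing Implicit Defensive.
Import Order.TTheory GRing.Theory Num.Theory.
Import numFieldNormedType.Exports.
Local Open Scope classical_set_scope.
Local Open Scope ring_scope.

(* R^d = row vectors 'rV[R]_d, equipped with its Borel sigma-algebra
   (the sigma-algebra generated by the open sets of the product topology). *)
Definition Rd (R : realType) (d : nat) := g_sigma_algebraType (@open 'rV[R]_d).
HB.instance Definition _ (R : realType) (d : nat) :=
  Measurable.on (Rd R d).

Definition dotp (R : realType) (d : nat) (x y : 'rV[R]_d) : R :=
  \sum_(i < d) x ord0 i * y ord0 i.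
Definition sqnorm (R : realType) (d : nat) (x : 'rV[R]_d) : R := dotp x x.
Definition edist (R : realType) (d : nat) (x y : 'rV[R]_d) : R :=
  Num.sqrt (sqnorm (x - y)).

(* Euclidean diameter of a set (in \bar R; -oo for the empty set). *)
Definition diam (R : realType) (d : nat) (A : set 'rV[R]_d) : \bar R :=
  ereal_sup [set (edist x y)%:E | x in A & y in A].

(* Contribution diam(C)^s of a covering set, with the convention that the
   empty set contributes 0 (so that H^0 is the counting measure). *)
Definition diam_pow (R : realType) (d : nat) (s : R) (C : set 'rV[R]_d) : \bar R :=
  if `[< C = set0 >] then 0%E else (powR (fine (diam C)) s)%:E.

Definition hausdorff_pre (R : realType) (d : nat) (s delta : R)
    (A : set 'rV[R]_d) : \bar R :=
  ereal_inf [set (\sum_(0 <= n <oo) diam_pow s (C n))%E |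
             C in [set C : nat -> set 'rV[R]_d |
                     A `<=` \bigcup_n C n /\
                     forall n, (diam (C n) <= delta%:E)%E]].

(* s-dimensional Hausdorff outer measure H^s(A) = lim_{delta -> 0+} H^s_delta(A)
   (= sup over delta > 0, by monotonicity). *)
Definition hausdorff (R : realType) (d : nat) (s : R) (A : set 'rV[R]_d) : \bar R :=
  ereal_sup [set hausdorff_pre s delta A | delta in [set delta : R | 0 < delta]].

Definition hausdorff_dim (R : realType) (d : nat) (A : set 'rV[R]_d) : \bar R :=
  ereal_inf [set s%:E | s in [set s : R | 0 <= s /\ hausdorff s A = 0%E]].

Definition no_small_mass (R : realType) (d : nat) (q : probability (Rd R d) R) : Prop :=
  forall A : set (Rd R d), measurable A ->
    (hausdorff_dim A <= (d%:R - 1)%:E)%E -> q A = 0%E.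

Definition P2 (R : realType) (d : nat) (p : probability (Rd R d) R) : Prop :=
  (\int[p]_x (sqnorm x)%:E < +oo)%E.

Definition Cpl (R : realType) (d : nat) (p q : probability (Rd R d) R)
    : set (probability (Rd R d * Rd R d)%type R) :=
  [set pi | (forall A : set (Rd R d), measurable A -> pi (fst @^-1` A) = p A) /\
            (forall A : set (Rd R d), measurable A -> pi (snd @^-1` A) = q A)].

Definition MCov (R : realType) (d : nat) (p q : probability (Rd R d) R) : \bar R :=
  ereal_sup [set (\int[pi]_z (dotp z.1 z.2)%:E)%E | pi in Cpl p q].

Definition proper_convex (R : realType) (d : nat) (psi : Rd R d -> \bar R) : Prop :=
  (forall x, psi x != -oo%E) /\
  (exists x, (psi x < +oo)%E) /\
  (forall (x y : 'rV[R]_d) (t : R), 0 < t < 1 ->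
     (psi (t *: x + (1 - t) *: y)%R <= t%:E * psi x + (1 - t)%:E * psi y)%E).

Definition conjugate (R : realType) (d : nat) (psi : Rd R d -> \bar R)
    : Rd R d -> \bar R :=
  fun x => ereal_sup [set ((dotp x y)%:E - psi y)%E | y in [set: 'rV[R]_d]].

(* Main.v *)
Require Import Defs.
From HB Require Import structures.
From mathcomp Require Import all_boot all_order all_algebra.
From mathcomp Require Import all_classical all_reals all_analysis.
From mathcomp Require Import measurable_realfun.
From mathcomp Require Import ring lra.
Import Order.TTheory GRing.Theory Num.Theory.
Import numFieldNormedType.Exports.
Local Open Scope classical_set_scope.
Local Open Scope ring_scope.
Set Implicit Arguments. Unset Strict Implicit.


Section Alg.
Variables (R : realType) (d : nat).
Implicit Types x y : 'rV[R]_d.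

Lemma dotpC x y : dotp x y = dotp y x.
Proof. by rewrite /dotp; apply: eq_bigr => i _; rewrite mulrC. Qed.

Lemma sqnorm_ge0 x : 0 <= sqnorm x.
Proof. by rewrite /sqnorm /dotp; apply: sumr_ge0 => i _; rewrite -expr2 sqr_ge0. Qed.

Lemma abs_mul_le (a b : R) : `|a * b| <= a * a + b * b.
Proof.
rewrite normrM.
have ha : a * a = `|a| * `|a| by rewrite -normrM ger0_norm // -expr2 sqr_ge0.
have hb : b * b = `|b| * `|b| by rewrite -normrM ger0_norm // -expr2 sqr_ge0.
rewrite ha hb; have := normr_ge0 a; have := normr_ge0 b.
set u := `|a|; set v := `|b| => hv hu; nra.
Qed.

Lemma dotp_abs x y : `|dotp x y| <= sqnorm x + sqnorm y.
Proof.
rewrite /sqnorm /dotp -big_split /=.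
apply: le_trans (ler_norm_sum _ _ _) _; apply: ler_sum => i _.
exact: abs_mul_le.
Qed.

End Alg.

Section Meas.
Variables (R : realType) (d : nat).

Lemma coord_mfun (i : 'I_d) :
  measurable_fun [set: Rd R d] (fun x : Rd R d => (x : 'rV[R]_d) ord0 i).
Proof.
apply: (measurability _ (RGenOpens.measurableE R)).
move=> _ [_ [a [b ->]] <-]; rewrite setTI.
apply: sub_sigma_algebra.
apply: (@open_comp _ _ (fun M : 'M[R]_(1, d) => M ord0 i)).
  by move=> x _; exact: coord_continuous.
exact: interval_open.
Qed.

Lemma mdotp dd (X : measurableType dd) (f g : X -> Rd R d) :
  measurable_fun setT f -> measurable_fun setT g ->
  measurable_fun setT (fun x => dotp (f x) (g x)).
Proof.
move=> mf mg; rewrite /dotp.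
apply: measurable_sum => i.
apply: measurable_funM.
  exact: (measurableT_comp (coord_mfun i) mf).
exact: (measurableT_comp (coord_mfun i) mg).
Qed.

Lemma msqnorm : measurable_fun [set: Rd R d] (fun x : Rd R d => sqnorm x).
Proof. exact: mdotp. Qed.

End Meas.


Section Int.
Context dd (X : measurableType dd) (R : realType) (mu : {measure set X -> \bar R}).
Local Open Scope ereal_scope.

Lemma le_int (f g : X -> \bar R) : measurable_fun setT f -> measurable_fun setT g ->
  (forall x, f x <= g x) -> \int[mu]_x f x <= \int[mu]_x g x.
Proof.
intros mf mg fg; rewrite integralE [leRHS]integralE.
have h1 : \int[mu]_x f^\+ x <= \int[mu]_x g^\+ x.
  apply: (ge0_le_integral mu measurableT (fun x _ => funepos_ge0 f x)
    (measurable_funepos mf) (measurable_funepos mg)).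
  move=> x _; apply: (@funepos_le _ _ setT); last exact: in_setT.
  by move=> y _; exact: fg.
have h2 : \int[mu]_x g^\- x <= \int[mu]_x f^\- x.
  apply: (ge0_le_integral mu measurableT (fun x _ => funeneg_ge0 g x)
    (measurable_funeneg mg) (measurable_funeneg mf)).
  move=> x _; apply: (@funeneg_le _ _ setT); last exact: in_setT.
  by move=> y _; exact: fg.
exact: leeB h1 h2.
Qed.

Lemma int_addH (H : X -> \bar R) (g : X -> R) : measurable_fun setT H ->
  (forall x, 0 <= H x) -> mu.-integrable setT (EFin \o g) ->
  \int[mu]_x (H x + (g x)%:E) = \int[mu]_x H x + \int[mu]_x (g x)%:E.
Proof.
intros mH H0 ig.
have mg : measurable_fun setT (EFin \o g) := measurable_int _ ig.
have gfin := integrable_fin_num measurableT ig.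
have [Hfin|Hoo] := ltP (\int[mu]_x H x) +oo.
  apply: integralD => //; apply/integrableP; split => //.
  by under eq_integral do rewrite gee0_abs //.
have HI : \int[mu]_x H x = +oo by apply/eqP; rewrite eq_le leey Hoo.
rewrite HI addye; last by move: gfin; rewrite fin_numE => /andP[].
set F := fun x => H x + (g x)%:E.
have mF : measurable_fun setT F := emeasurable_funD mH mg.
have ia : mu.-integrable setT (fun x => (`|g x|)%:E) := integrable_abse ig.
have iafin := integrable_fin_num measurableT ia.
have ma : measurable_fun setT (fun x => (`|g x|)%:E) := measurable_int _ ia.
have a0 : forall x, [set: X] x -> 0 <= (`|g x|)%:E by move=> x _; rewrite lee_fin.
have negF : \int[mu]_x F^\- x <= \int[mu]_x (`|g x|)%:E.
  apply: (ge0_le_integral mu measurableT (fun x _ => funeneg_ge0 F x)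
    (measurable_funeneg mF) ma).
  + move=> x _; rewrite funenegE ge_max lee_fin normr_ge0 andbT.
    rewrite leeNl /F; apply: (le_trans _ (leeDr _ (H0 x))).
    by rewrite -EFinN lee_fin lerNl -normrN ler_norm.
have posF : +oo <= \int[mu]_x F^\+ x + \int[mu]_x (`|g x|)%:E.
  rewrite -(ge0_integralD mu measurableT (fun x _ => funepos_ge0 F x)
    (measurable_funepos mF) a0 ma).
  rewrite -HI; apply: (ge0_le_integral mu measurableT (fun x _ => H0 x) mH).
  + apply: emeasurable_funD => //; exact: measurable_funepos.
  + move=> x _.
    have h1 : H x <= F x + (`|g x|)%:E.
      rewrite /F -addeA -EFinD; apply: leeDl; rewrite lee_fin.
      by have := ler_norm (- g x); rewrite normrN => h; lra.
    apply: (le_trans h1); apply: leeD2r.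
    by rewrite funeposE le_max lexx.
rewrite integralE.
have Fpos : \int[mu]_x F^\+ x = +oo.
  apply/eqP; rewrite eq_le leey /=.
  move: posF; rewrite leye_eq; move: iafin.
  case: (\int[mu]_x `|g x|%:E) => [s||] //.
  by case: (\int[mu]_x F^\+ x) => [r||].
have Fneg : \int[mu]_x F^\- x \is a fin_num.
  rewrite fin_numElt; apply/andP; split.
    by apply: (lt_le_trans _ (integral_ge0 _ _)) => //.
  apply: (le_lt_trans negF); move: iafin.
  by case: (\int[mu]_x `|g x|%:E) => [s||] // _; rewrite ltry.
rewrite Fpos; move: Fneg.
by case: (\int[mu]_x F^\- x).
Qed.

Lemma transfer dd' (Y : measurableType dd') (nu : {measure set Y -> \bar R})
  (phi : X -> Y) : measurable_fun setT phi ->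
  (forall A, measurable A -> nu A = mu (phi @^-1` A)) ->
  forall f : Y -> \bar R, measurable_fun setT f ->
  \int[nu]_y f y = \int[mu]_x f (phi x).
Proof.
intros mphi hnu f mf.
rewrite [RHS](_ : _ = \int[mu]_x (f \o phi) x) //.
rewrite integralE [RHS]integralE.
have e1 := ge0_integral_pushforward mphi mu measurableT (measurable_funepos mf)
  (fun y _ => funepos_ge0 f y).
have e2 := ge0_integral_pushforward mphi mu measurableT (measurable_funeneg mf)
  (fun y _ => funeneg_ge0 f y).
rewrite preimage_setT in e1 e2.
rewrite (funepos_comp f phi) (funeneg_comp f phi).
congr (_ - _).
  etransitivity; last exact: e1.
  apply: eq_measure_integral => A mA _; exact: hnu.
etransitivity; last exact: e2.
apply: eq_measure_integral => A mA _; exact: hnu.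
Qed.

Lemma int_bound (f b : X -> R) : measurable_fun setT f ->
  mu.-integrable setT (EFin \o b) -> (forall x, (`|f x| <= b x)%R) ->
  mu.-integrable setT (EFin \o f).
Proof.
intros mf ib fb; apply: (le_integrable measurableT _ _ ib).
  exact/measurable_EFinP.
move=> x _ /=; rewrite lee_fin (le_trans (fb x)) //.
by rewrite ler_norm.
Qed.

Lemma int_LB (F : X -> \bar R) (g : X -> R) : measurable_fun setT F ->
  (forall x, (g x)%:E <= F x) -> mu.-integrable setT (EFin \o g) ->
  \int[mu]_x F x = \int[mu]_x (F x - (g x)%:E) + \int[mu]_x (g x)%:E.
Proof.
intros mF Fg ig.
have mg : measurable_fun setT (EFin \o g) := measurable_int _ ig.
rewrite -int_addH //.
- by apply: eq_integral => x _; rewrite subeK.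
- exact: emeasurable_funB.
- by move=> x; rewrite sube_ge0 // Fg.
Qed.

Lemma int_LB_gt (F : X -> \bar R) (g : X -> R) : measurable_fun setT F ->
  (forall x, (g x)%:E <= F x) -> mu.-integrable setT (EFin \o g) ->
  -oo < \int[mu]_x F x.
Proof.
intros mF Fg ig; rewrite (int_LB mF Fg ig).
have gf : \int[mu]_x (g x)%:E \is a fin_num := integrable_fin_num measurableT ig.
move: gf.
have : 0 <= \int[mu]_x (F x - (g x)%:E).
  by apply: integral_ge0 => x _; rewrite sube_ge0 // Fg.
case: (\int[mu]_x (F x - (g x)%:E)) => [r||] //.
all: move=> _ /fineK <-; by rewrite -?EFinD ?ltNyr.
Qed.

Lemma int_addLB (F1 F2 : X -> \bar R) (g1 g2 : X -> R) :
  measurable_fun setT F1 -> measurable_fun setT F2 ->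
  (forall x, (g1 x)%:E <= F1 x) -> (forall x, (g2 x)%:E <= F2 x) ->
  mu.-integrable setT (EFin \o g1) -> mu.-integrable setT (EFin \o g2) ->
  \int[mu]_x (F1 x + F2 x) = \int[mu]_x F1 x + \int[mu]_x F2 x.
Proof.
intros mF1 mF2 h1 h2 i1 i2.
have mg1 : measurable_fun setT (EFin \o g1) := measurable_int _ i1.
have mg2 : measurable_fun setT (EFin \o g2) := measurable_int _ i2.
have i12 : mu.-integrable setT (EFin \o (fun x => g1 x + g2 x)%R).
  have -> : EFin \o (fun x => g1 x + g2 x)%R = (EFin \o g1) \+ (EFin \o g2).
    by apply/funext => x /=; rewrite EFinD.
  exact: integrableD.
rewrite (int_LB mF1 h1 i1) (int_LB mF2 h2 i2).
rewrite (@int_LB (fun x => F1 x + F2 x) (fun x => g1 x + g2 x)%R) //; last 2 first.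
- exact: emeasurable_funD.
- by move=> x; rewrite EFinD; apply: leeD.
rewrite addeACA; congr (_ + _).
  rewrite -ge0_integralD //.
  + apply: eq_integral => x _; rewrite EFinD oppeD //= addeACA //.
  + by move=> x _; rewrite sube_ge0 // h1.
  + exact: emeasurable_funB.
  + by move=> x _; rewrite sube_ge0 // h2.
  + exact: emeasurable_funB.
rewrite -(integralD_EFin measurableT i1 i2).
by apply: eq_integral => x _; rewrite /= EFinD.
Qed.

End Int.


Section Dense.
Variables (R : realType) (d : nat).
Variable psi : 'rV[R]_d -> \bar R.
Variable x0 : 'rV[R]_d.
Hypothesis psix0 : psi x0 \is a fin_num.

Definition Iidx := ('rV[int]_d * int * nat)%type.

Definition Sset (i : Iidx) : set 'rV[R]_d :=
  [set y | psi y \is a fin_num /\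
    (forall c, `|y ord0 c - (i.1.1 ord0 c)%:~R / (i.2.+1)%:R| <= ((i.2.+1)%:R)^-1) /\
    `|fine (psi y) - i.1.2%:~R / (i.2.+1)%:R| <= ((i.2.+1)%:R)^-1].

Definition yseq (n : nat) : 'rV[R]_d :=
  match unpickle n with Some i => xget x0 (Sset i) | None => x0 end.

Lemma yseq_fin n : psi (yseq n) \is a fin_num.
Proof.
rewrite /yseq; case: (unpickle n) => [i|//].
have [[y Sy]|nS] := pselect (exists y, Sset i y).
  by have [] := xgetI x0 Sy.
rewrite xgetPN //; move=> y Sy; apply: nS; by exists y.
Qed.

Lemma floor_approx (t M : R) : 0 < M ->
  `|t - (Num.floor (t * M))%:~R / M| <= M^-1.
Proof.
move=> M0; have := floor_itv (t * M); set f := (Num.floor (t * M))%:~R.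
move=> /andP[h1 h2].
have -> : t - f / M = (t * M - f) * M^-1 by field; rewrite gt_eqF.
rewrite normrM (ger0_norm (_ : 0 <= t * M - f)); last by lra.
rewrite ger0_norm; last by rewrite invr_ge0 ltW.
rewrite -[leRHS]mul1r; apply: ler_wpM2r; first by rewrite invr_ge0 ltW.
move: h2; rewrite intrD /= -/f => h2; lra.
Qed.

Lemma yseq_approx y z e : psi y \is a fin_num -> 0 < e ->
  exists n, dotp z y - fine (psi y) - e <= dotp z (yseq n) - fine (psi (yseq n)).
Proof.
move=> fy e0.
set K := \sum_(c < d) `|z ord0 c|.
have K0 : 0 <= K by apply: sumr_ge0 => c _.
set B := (2 * K + 2) / e.
set m := Num.trunc B.
set M : R := (m.+1)%:R.
have B0 : 0 <= B by rewrite /B divr_ge0 // ?ltW //; lra.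
have BM : B < M by rewrite /M -truncn_lt_nat.
have M0 : 0 < M by rewrite /M ltr0Sn.
pose i : Iidx := (\row_c Num.floor (y ord0 c * M), Num.floor (fine (psi y) * M), m).
have Sy : Sset i y.
  split => //; split.
    by move=> c; rewrite /i /= mxE; exact: floor_approx.
  exact: floor_approx.
exists (pickle i); rewrite /yseq pickleK.
have [fy' [hc ha]] := xgetI x0 Sy.
set y' := xget x0 (Sset i) in fy' hc ha *.
set t := M^-1.
have hc' c : `|y ord0 c - y' ord0 c| <= 2 * t.
  have := hc c; have := floor_approx (y ord0 c) M0.
  rewrite /i /= mxE -/t; set q := (_ / M).
  rewrite !ler_norml => /andP[h1 h2] /andP[h3 h4]; lra.
have ha' : fine (psi y') - fine (psi y) <= 2 * t.
  move: ha; have := floor_approx (fine (psi y)) M0.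
  rewrite /i /= -/t; set q := (_ / M).
  rewrite !ler_norml => /andP[h1 h2] /andP[h3 h4]; lra.
have hD : dotp z y - dotp z y' <= K * (2 * t).
  rewrite /dotp -sumrB /K mulr_suml; apply: ler_sum => c _.
  rewrite -mulrBr; apply: (le_trans (ler_norm _)).
  by rewrite normrM; apply: ler_wpM2l.
have hK : K * (2 * t) + 2 * t <= e.
  have -> : K * (2 * t) + 2 * t = (2 * K + 2) / M by rewrite /t; ring.
  rewrite ler_pdivrMr //; move: BM; rewrite /B ltr_pdivrMr // => h; nra.
set u := K * (2 * t) in hD hK.
lra.
Qed.

Definition fseq (z : 'rV[R]_d) (n : nat) : R := dotp z (yseq n) - fine (psi (yseq n)).

Lemma conj_ge (z : Rd R d) n : ((fseq z n)%:E <= conjugate psi z)%E.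
Proof.
rewrite /conjugate; apply: ereal_sup_ubound; exists (yseq n) => //.
by rewrite /fseq EFinB fineK // yseq_fin.
Qed.

Lemma conj_le (z : Rd R d) : (forall y, psi y != -oo%E) ->
  (conjugate psi z <= ereal_sup (range (fun n => (fseq z n)%:E)))%E.
Proof.
move=> pN; apply: ge_ereal_sup => _ [y _ <-].
move: (pN y); case E: (psi y) => [r| |] //= _; last by rewrite leNye.
apply/lee_addgt0Pr => e e0.
have fy : psi y \is a fin_num by rewrite E.
have [n hn] := yseq_approx z fy e0.
apply: (@le_trans _ _ ((fseq z n)%:E + e%:E)%E); last first.
  by apply: leeD2r; apply: ereal_sup_ubound; exists n.
rewrite -EFinD lee_fin /fseq; move: hn; rewrite E /=; lra.
Qed.

End Dense.


Section Constr.
Variables (R : realType) (d : nat).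
Variables (y : nat -> Rd R d) (a : nat -> R).

Definition ff n (z : Rd R d) : R := dotp z (y n) - a n.

Fixpoint TA (N : nat) (z : Rd R d) : Rd R d * R :=
  match N with
  | 0 => (y 0, a 0)
  | N'.+1 => let p := TA N' z in
     if dotp z p.1 - p.2 < ff N'.+1 z then (y N'.+1, a N'.+1) else p
  end.

Definition TT N (z : Rd R d) : Rd R d := (TA N z).1.
Definition AA N (z : Rd R d) : R := (TA N z).2.
Definition GG N (z : Rd R d) : R := dotp z (TT N z) - AA N z.

Lemma TA_in N z : exists2 n, (n <= N)%N & TA N z = (y n, a n).
Proof.
elim: N => [|N [n nN IH]] /=; first by exists 0%N.
case: ifP => _; first by exists N.+1.
by exists n => //; apply: leqW.
Qed.

Lemma GG_in N z : exists2 n, (n <= N)%N & GG N z = ff n z.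
Proof.
have [n nN h] := TA_in N z; exists n => //.
by rewrite /GG /TT /AA h.
Qed.

Lemma GG_S N z : GG N.+1 z = Num.max (GG N z) (ff N.+1 z).
Proof.
rewrite /GG /TT /AA /=; case: ifP => h.
  by rewrite /ff; move: h; rewrite -/(ff _ _) => h; rewrite (max_idPr (ltW h)).
by rewrite max_l // leNgt h.
Qed.

Lemma GG_ge N n z : (n <= N)%N -> ff n z <= GG N z.
Proof.
elim: N => [|N IH]; first by rewrite leqn0 => /eqP ->.
rewrite leq_eqVlt => /orP[/eqP ->|]; first by rewrite GG_S le_max lexx orbT.
by move=> /IH h; rewrite GG_S le_max h.
Qed.

Lemma GG_nd z : {homo (fun N => GG N z) : n m / (n <= m)%N >-> n <= m}.
Proof.
apply/nondecreasing_seqP => n; rewrite GG_S le_max lexx //.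
Qed.

Lemma mff n : measurable_fun setT (ff n).
Proof.
apply: measurable_funB; last exact: measurable_cst.
by apply: mdotp => //; exact: measurable_cst.
Qed.

Lemma mTA N : measurable_fun setT (TT N) /\ measurable_fun setT (AA N).
Proof.
elim: N => [|N [mT mA]].
  by split; exact: measurable_cst.
have mG : measurable_fun setT (GG N).
  by apply: measurable_funB => //; exact: mdotp.
have mb : measurable_fun setT (fun z => GG N z < ff N.+1 z).
  exact: measurable_fun_ltr (mff _).
split.
  rewrite (_ : TT N.+1 = fun z => if GG N z < ff N.+1 z then y N.+1 else TT N z).
    by apply: measurable_fun_ifT => //; exact: measurable_cst.
  by apply/funext => z; rewrite /TT /=; case: ifP.
rewrite (_ : AA N.+1 = fun z => if GG N z < ff N.+1 z then a N.+1 else AA N z).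
  by apply: measurable_fun_ifT => //; exact: measurable_cst.
by apply/funext => z; rewrite /AA /=; case: ifP.
Qed.

End Constr.

Definition mkmfun dd dd' (X : measurableType dd) (Y : measurableType dd')
  (f : X -> Y) (mf : measurable_fun setT f) : {mfun X >-> Y} :=
  MeasurableFun.Pack (MeasurableFun.Class (isMeasurableFun.Build _ _ _ _ f mf)).

Section Prob.
Variables (R : realType) (d : nat) (q : probability (Rd R d) R).
Variable psi : Rd R d -> \bar R.
Variables (y : nat -> Rd R d) (a : nat -> R).
Hypothesis hpa : forall n, psi (y n) = (a n)%:E.
Hypothesis mpsi : measurable_fun setT psi.
Hypothesis P2q : P2 q.

Definition pN N : probability (Rd R d) R :=
  distribution q (mkmfun (proj1 (mTA y a N))).
Definition piN N : probability (Rd R d * Rd R d)%type R :=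
  distribution q (mkmfun (measurable_fun_pair (proj1 (mTA y a N)) (@measurable_id _ _ setT))).

Lemma piN_cpl N : Cpl (pN N) q (piN N).
Proof. by split => A mA. Qed.

Lemma sq_int : q.-integrable setT (EFin \o (fun z : Rd R d => sqnorm z)).
Proof.
apply/integrableP; split; first by apply/measurable_EFinP; exact: msqnorm.
under eq_integral do rewrite /= ger0_norm ?sqnorm_ge0 //.
exact: P2q.
Qed.

Lemma TT_bound N z : sqnorm (TT y a N z) <= \sum_(n < N.+1) sqnorm (y n).
Proof.
have [n nN h] := TA_in y a N z.
rewrite /TT h /= (bigD1 (Ordinal (nN : (n < N.+1)%N))) //= lerDl.
by apply: sumr_ge0 => i _; exact: sqnorm_ge0.
Qed.

Lemma AA_bound N z : `|AA y a N z| <= \sum_(n < N.+1) `|a n|.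
Proof.
have [n nN h] := TA_in y a N z.
rewrite /AA h /= (bigD1 (Ordinal (nN : (n < N.+1)%N))) //= lerDl.
by apply: sumr_ge0 => i _.
Qed.

Lemma P2pN N : P2 (pN N).
Proof.
rewrite /P2 (transfer (mu := q) (nu := pN N) (proj1 (mTA y a N))) //; last first.
  by apply/measurable_EFinP; exact: msqnorm.
apply: (le_lt_trans (le_int q (g := cst (\sum_(n < N.+1) sqnorm (y n))%:E) _ _ _)).
- apply/measurable_EFinP; apply: measurableT_comp (proj1 (mTA y a N)).
  exact: msqnorm.
- exact: measurable_cst.
- by move=> z; rewrite lee_fin; exact: TT_bound.
rewrite integral_cst //; apply: lte_mul_pinfty => //.
  by rewrite lee_fin; apply: sumr_ge0 => i _; exact: sqnorm_ge0.
by apply: (le_lt_trans (probability_le1 q measurableT)); rewrite ltry.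
Qed.

Lemma value N :
  (\int[q]_z (GG y a N z)%:E <= MCov (pN N) q - \int[pN N]_x psi x)%E.
Proof.
have [mT mA] := mTA y a N.
set B := \sum_(n < N.+1) sqnorm (y n).
set C := \sum_(n < N.+1) `|a n|.
have e1 : (\int[pN N]_x psi x = \int[q]_z (AA y a N z)%:E)%E.
  rewrite (transfer (mu := q) (nu := pN N) mT) //.
  apply: eq_integral => z _; have [n _ h] := TA_in y a N z.
  by rewrite /TT /AA h /= hpa.
have e2 : (\int[piN N]_z (dotp z.1 z.2)%:E = \int[q]_z (dotp (TT y a N z) z)%:E)%E.
  rewrite (transfer (mu := q) (nu := piN N)
    (measurable_fun_pair mT (@measurable_id _ _ setT))) //.
  apply/measurable_EFinP; apply: mdotp; [exact: measurable_fst|exact: measurable_snd].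
have i1 : q.-integrable setT (EFin \o (fun z => dotp (TT y a N z) z)).
  apply: (@int_bound _ _ _ q _ (fun z => B + sqnorm z)).
  - by apply: mdotp.
  - have -> : EFin \o (fun z => B + sqnorm z) =
        (EFin \o cst B) \+ (EFin \o (fun z : Rd R d => sqnorm z)).
      by apply/funext => z /=; rewrite EFinD.
    apply: integrableD => //; [exact: finite_measure_integrable_cst | exact: sq_int].
  - move=> z; apply: (le_trans (dotp_abs _ _)); rewrite lerD2r; exact: TT_bound.
have i2 : q.-integrable setT (EFin \o AA y a N).
  apply: (int_bound (b := cst C)) => //.
    exact: finite_measure_integrable_cst.
  by move=> z; exact: AA_bound.
have e3 : (\int[q]_z (GG y a N z)%:E =
    \int[q]_z (dotp (TT y a N z) z)%:E - \int[q]_z (AA y a N z)%:E)%E.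
  rewrite -(integralB_EFin measurableT i1 i2); apply: eq_integral => z _.
  by rewrite /GG EFinB dotpC.
rewrite e3 -e1 -e2; apply: leeB => //.
apply: ereal_sup_ubound; exists (piN N) => //; exact: piN_cpl.
Qed.

End Prob.


Lemma int_marg (R : realType) dd (X : measurableType dd) dd' (Y : measurableType dd')
  (mu : {measure set X -> \bar R}) (nu : {measure set Y -> \bar R})
  (phi : X -> Y) (h : Y -> R) : measurable_fun setT phi ->
  (forall A, measurable A -> nu A = mu (phi @^-1` A)) ->
  nu.-integrable setT (EFin \o h) -> mu.-integrable setT (EFin \o (h \o phi)).
Proof.
intros mphi hnu ih.
have mh : measurable_fun setT (EFin \o h) := measurable_int _ ih.
apply/integrableP; split; first exact: (measurableT_comp mh mphi).
move/integrableP: ih => [_ hi].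
rewrite -(transfer mphi hnu (f := fun y => `|(h y)%:E|%E)) //.
exact: (measurableT_comp (@abse_measurable R setT) mh).
Qed.

Section Final.
Variables (R : realType) (d : nat) (q : probability (Rd R d) R).
Variable psi : Rd R d -> \bar R.
Hypothesis P2q : P2 q.
Hypothesis mpsi : measurable_fun setT psi.
Variable x0 : Rd R d.
Hypothesis psix0 : psi x0 \is a fin_num.
Hypothesis pNinf : forall x, psi x != -oo%E.

Let y := yseq psi x0.
Let a n := fine (psi (y n)).

Let hpa n : psi (y n) = (a n)%:E.
Proof. by rewrite /a fineK // yseq_fin. Qed.

Lemma G_cvg (z : Rd R d) :
  ((GG y a N z)%:E @[N --> \oo] --> conjugate psi z)%E.
Proof.
have nd : {homo (fun N => (GG y a N z)%:E) : n m / (n <= m)%N >-> (n <= m)%E}.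
  by move=> n m nm; rewrite lee_fin; exact: GG_nd.
suff <- : ereal_sup (range (fun N => (GG y a N z)%:E)) = conjugate psi z.
  exact: ereal_nondecreasing_cvgn nd.
apply/eqP; rewrite eq_le; apply/andP; split.
  apply: ge_ereal_sup => _ [N _ <-]; have [n _ ->] := GG_in y a N z.
  exact: (conj_ge psix0 z n).
apply: (le_trans (conj_le x0 z pNinf)); apply: ge_ereal_sup => _ [n _ <-].
apply: (@le_trans _ _ (GG y a n z)%:E); first by rewrite lee_fin; exact: GG_ge.
by apply: ereal_sup_ubound; exists n.
Qed.

Lemma mGG N : measurable_fun setT (fun z => (GG y a N z)%:E).
Proof.
apply/measurable_EFinP; have [mT mA] := mTA y a N.
by apply: measurable_funB => //; exact: mdotp.
Qed.

Lemma mconj : measurable_fun setT (conjugate psi).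
Proof.
apply: (emeasurable_fun_cvg (fun N z => (GG y a N z)%:E)); first exact: mGG.
by move=> z _; exact: G_cvg.
Qed.

Lemma i_f0 : q.-integrable setT (EFin \o ff y a 0).
Proof.
set C := sqnorm (y 0) + `|a 0|.
apply: (@int_bound _ _ _ q _ (fun z => sqnorm z + C)).
- exact: mff.
- have -> : EFin \o (fun z => sqnorm z + C) =
        (EFin \o (fun z : Rd R d => sqnorm z)) \+ (EFin \o cst C).
    by apply/funext => z /=; rewrite EFinD.
  apply: integrableD => //; [exact: sq_int | exact: finite_measure_integrable_cst].
- move=> z; rewrite /ff /C addrA; apply: (le_trans (ler_normB _ _)).
  by rewrite lerD2r dotp_abs.
Qed.

Lemma int_cvg : (\int[q]_z (GG y a N z)%:E @[N --> \oo] -->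
  \int[q]_z conjugate psi z)%E.
Proof.
set f0 := ff y a 0.
have mf0 : measurable_fun setT (EFin \o f0) := measurable_int _ i_f0.
have f0fin : (\int[q]_z (f0 z)%:E)%E \is a fin_num := integrable_fin_num measurableT i_f0.
have eC : (\int[q]_z conjugate psi z =
    \int[q]_z (conjugate psi z - (f0 z)%:E) + \int[q]_z (f0 z)%:E)%E :=
  int_LB mconj (fun z => conj_ge psix0 z 0) i_f0.
rewrite eC.
have -> : (fun N => \int[q]_z (GG y a N z)%:E)%E =
   (fun N => \int[q]_z ((GG y a N z)%:E - (f0 z)%:E) + \int[q]_z (f0 z)%:E)%E.
  apply/funext => N; apply: (int_LB (mGG N) _ i_f0).
  by move=> z; rewrite lee_fin; exact: GG_ge.
suff h : (\int[q]_z ((GG y a N z)%:E - (f0 z)%:E) @[N --> \oo] -->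
    \int[q]_z (conjugate psi z - (f0 z)%:E))%E.
  apply: cvgeD h (cvg_cst _); exact: fin_num_adde_defl.
have := @cvg_monotone_convergence _ _ _ q _ measurableT
  (fun N z => (GG y a N z)%:E - (f0 z)%:E)%E.
have lim z : limn (fun N => (GG y a N z)%:E - (f0 z)%:E)%E =
    (conjugate psi z - (f0 z)%:E)%E.
  apply/cvg_lim => //; apply: cvgeB => //; last exact: cvg_cst.
    exact: fin_num_adde_defl.
  exact: G_cvg.
rewrite (_ : (\int[q]_z (conjugate psi z - (f0 z)%:E) = \int[q]_x limn
   ((fun N z => ((GG y a N z)%:E - (f0 z)%:E)%E) ^~ x))%E); last first.
  by apply: eq_integral => z _; rewrite -lim.
apply.
- by move=> N; apply: emeasurable_funB => //; exact: mGG.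
- by move=> N z _; rewrite sube_ge0 // lee_fin; exact: GG_ge.
- move=> z _ m n mn; apply: leeB => //; rewrite lee_fin; exact: GG_nd.
Qed.

Lemma ge_dir : (\int[q]_z conjugate psi z <= ereal_sup
  [set (MCov p q - \int[p]_x psi x)%E | p in [set p : probability (Rd R d) R | P2 p]])%E.
Proof.
rewrite -(cvg_lim (@ereal_hausdorff R) int_cvg).
apply: lime_le; first exact: cvgP int_cvg.
apply: nearW => N.
apply: (le_trans (value hpa mpsi P2q N)).
apply: ereal_sup_ubound; exists (pN q y a N); [exact: P2pN | by []].
Qed.

Lemma le_dir (p : probability (Rd R d) R) : P2 p ->
  (MCov p q - \int[p]_x psi x <= \int[q]_z conjugate psi z)%E.
Proof.
move=> P2p.
have cgt z : (-oo < conjugate psi z)%E := lt_le_trans (ltNyr _) (conj_ge psix0 z 0).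
have hc z w : ((dotp z w)%:E - psi w <= conjugate psi z)%E.
  by apply: ereal_sup_ubound; exists w.
have [[z0 hz0]|allinf] := pselect (exists z, (conjugate psi z < +oo)%E); last first.
  have -> : (\int[q]_z conjugate psi z = +oo)%E.
    rewrite (eq_integral (cst +oo%E)); last first.
      move=> z _; apply/eqP; rewrite eq_le leey /= leNgt; apply/negP => h.
      by apply: allinf; exists z.
    rewrite integral_cst // gt0_mulye //.
    apply: (@lt_le_trans _ _ 1%E) => //; rewrite le_eqVlt; apply/orP; left.
    by apply/eqP; exact: esym (probability_setT q).
  exact: leey.
have c0fin : conjugate psi z0 \is a fin_num by rewrite fin_numElt cgt hz0.
set c0 := fine (conjugate psi z0).
set ell := fun w : Rd R d => dotp z0 w - c0.
have hell w : ((ell w)%:E <= psi w)%E.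
  move: (pNinf w) (hc z0 w); rewrite -(fineK c0fin) -/c0.
  case: (psi w) => [r| |] //= _; last by move=> _; rewrite leey.
  by rewrite -EFinB !lee_fin /ell => h; lra.
have iell : p.-integrable setT (EFin \o ell).
  apply: (@int_bound _ _ _ p _ (fun w => sqnorm w + (sqnorm z0 + `|c0|))).
  - apply: measurable_funB; last exact: measurable_cst.
    exact: (mdotp (f := cst z0) (g := id) (measurable_cst _) (@measurable_id _ _ setT)).
  - have -> : EFin \o (fun w => sqnorm w + (sqnorm z0 + `|c0|)) =
        (EFin \o (fun w : Rd R d => sqnorm w)) \+ (EFin \o cst (sqnorm z0 + `|c0|)).
      by apply/funext => w /=; rewrite EFinD.
    apply: integrableD => //; [exact: sq_int | exact: finite_measure_integrable_cst].
  - move=> w; apply: (le_trans (ler_normB _ _)).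
    by rewrite addrA lerD2r addrC dotp_abs.
have Agt : (-oo < \int[p]_x psi x)%E := int_LB_gt mpsi hell iell.
have [Aoo|Alt] := eqVneq (\int[p]_x psi x)%E +oo%E.
  by rewrite Aoo /= addeNy leNye.
have Afin : (\int[p]_x psi x)%E \is a fin_num by rewrite fin_numElt Agt ltey Alt.
rewrite leeBlDr //.
apply: ge_ereal_sup => _ [pi [h1 h2] <-].
have Api : (\int[pi]_w psi w.1 = \int[p]_x psi x)%E.
  by rewrite (transfer (nu := p) (mu := pi) measurable_fst
    (fun A mA => esym (h1 A mA)) mpsi).
have Bpi : (\int[pi]_w conjugate psi w.2 = \int[q]_x conjugate psi x)%E.
  by rewrite (transfer (nu := q) (mu := pi) measurable_snd
    (fun A mA => esym (h2 A mA)) mconj).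
have i1 : pi.-integrable setT (EFin \o (ff y a 0 \o snd)).
  exact: (int_marg measurable_snd (fun A mA => esym (h2 A mA)) i_f0).
have i2 : pi.-integrable setT (EFin \o (ell \o fst)).
  exact: (int_marg measurable_fst (fun A mA => esym (h1 A mA)) iell).
apply: (@le_trans _ _ (\int[pi]_w (conjugate psi w.2 + psi w.1))%E).
  apply: le_int.
  - apply/measurable_EFinP; apply: mdotp; [exact: measurable_fst|exact: measurable_snd].
  - apply: emeasurable_funD.
      exact: (measurableT_comp mconj measurable_snd).
    exact: (measurableT_comp mpsi measurable_fst).
  - move=> [w1 w2] /=; move: (pNinf w1) (hc w2 w1).
    case: (psi w1) => [r| |] //= _.
      move=> h; rewrite -leeBlDr //; apply: (le_trans _ h).
      by rewrite dotpC ?EFinB.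
    by move=> _; rewrite addey ?leey // -ltNye cgt.
rewrite (int_addLB (g1 := fun w => ff y a 0 w.2) (g2 := fun w => ell w.1)) //.
- by rewrite Api Bpi.
all: try exact: (measurableT_comp mconj measurable_snd).
all: try exact: (measurableT_comp mpsi measurable_fst).
all: try by move=> w; exact: (conj_ge psix0 w.2 0).
all: try by move=> w; exact: hell.
Qed.

End Final.

Unset Implicit Arguments.

Theorem lemma2p6 (R : realType) (d : nat) (q : probability (Rd R d) R)
    (psi : Rd R d -> \bar R) :
  P2 q -> no_small_mass q -> proper_convex psi -> measurable_fun setT psi ->
  ereal_sup [set (MCov p q - \int[p]_x psi x)%E
            | p in [set p : probability (Rd R d) R | P2 p]]
  = (\int[q]_z conjugate psi z)%E.
Proof.
intros P2q nsm pc mpsi.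
have [pNinf [[x0 hx0] _]] := pc.
have psix0 : psi x0 \is a fin_num by rewrite fin_numElt ltNye pNinf hx0.
apply/eqP; rewrite eq_le; apply/andP; split.
  apply: ge_ereal_sup => _ [p P2p <-]; exact: (le_dir P2q mpsi psix0 pNinf P2p).
exact: (ge_dir P2q mpsi psix0 pNinf).
Qed.
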